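(* Let $n$ be a positive integer and $a,b,c,\alpha_0,\alpha_1,\dots,\alpha_{n-1}$ integers with $a\le\alpha_0\le\alpha_1\le\dots\le\alpha_{n-1}$ and $b\le c$. Then the number of families $(P_0,P_1,\dots,P_{n-1})$ of non-intersecting lattice paths, where $P_i$ runs from $(a,b-i)$ to $(\alpha_i,c)$ for $i=0,1,\dots,n-1$, equals $$\prod_{0\le i<j\le n-1}(\alpha_j-\alpha_i)\prod_{i=0}^{n-1}\frac{(\alpha_i+c-a-b)!}{(\alpha_i-a)!\,(c-b+i)!}.$$
   Context: A lattice path is a path in the integer lattice $\mathbb Z^2$ consisting of unit steps $(1,0)$ and $(0,1)$. A family of lattice paths is non-intersecting if no two paths of the family have a common point. *)

(* Defs.v *)
From mathcomp Require Import all_boot all_order all_algebra.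
Set Implicit Arguments. Unset Strict Implicit. Unset Printing Implicit Defensive.
Import Order.TTheory GRing.Theory Num.Theory.
Local Open Scope ring_scope.

Definition point := (int * int)%type.

Definition unit_step (p q : point) : bool :=
  (q == (p.1 + 1, p.2)) || (q == (p.1, p.2 + 1)).

(* A lattice path is represented by the (nonempty) sequence of the points it
   visits, consecutive points differing by a unit step.
   [lattice_path u v P] : P is a lattice path from u to v. *)
Definition lattice_path (u v : point) (P : seq point) : Prop :=
  exists t : seq point, P = u :: t /\ path unit_step u t /\ last u t = v.

Definition meet_paths (P Q : seq point) : bool := has (fun x => x \in Q) P.

Definition nonint_family (n : nat) (a b c : int) (alpha : nat -> int)
    (F : n.-tuple (seq point)) : Prop :=
  (forall i : 'I_n, lattice_path (a, b - (i : nat)%:Z) (alpha i, c) (tnth F i)) /\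
  (forall i j : 'I_n, i != j -> ~~ meet_paths (tnth F i) (tnth F j)).

(* Main.v *)
Require Import Defs.
From mathcomp Require Import all_boot all_order all_algebra fingroup perm zify ring lra.
Set Implicit Arguments. Unset Strict Implicit. Unset Printing Implicit Defensive.
Import Order.TTheory GRing.Theory Num.Theory.
Local Open Scope ring_scope.

Fixpoint seg (c x0 : int) (l : nat) : seq point :=
  if l is l'.+1 then (x0, c) :: seg c (x0 + 1) l' else [:: (x0, c)].

Lemma mem_seg_row (p : point) c x0 l : p \in seg c x0 l -> p.2 = c.
Proof.
elim: l x0 => [|l IH] x0 /=; rewrite in_cons ?in_nil.
  by rewrite orbF => /eqP ->.
by case/orP=> [/eqP -> //|/IH].
Qed.

Lemma mem_seg_col (p : point) c x0 l : p \in seg c x0 l -> x0 <= p.1 <= x0 + l%:Z.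
Proof.
elim: l x0 => [|l IH] x0 /=; rewrite in_cons ?in_nil.
  by rewrite orbF => /eqP -> /=; rewrite addr0 lexx.
case/orP=> [/eqP -> /=|/IH /andP [H1 H2]]; first by apply/andP; split; lia.
apply/andP; split; lia.
Qed.

Lemma seg_mem x c x0 l : x0 <= x <= x0 + l%:Z -> (x, c) \in seg c x0 l.
Proof.
elim: l x0 => [|l IH] x0 /=; rewrite in_cons ?in_nil.
  move=> H; have -> : x = x0 by lia. by rewrite eqxx.
move=> H; case: (x =P x0) => [->|ne]; first by rewrite eqxx.
apply/orP; right; apply: IH; apply/andP; split; lia.
Qed.

Lemma step_le u w : unit_step u w ->
  u.1 <= w.1 /\ u.2 <= w.2 /\ w.1 + w.2 = u.1 + u.2 + 1.
Proof.
case: u w => [x y] [x' y'] /orP [] /eqP [-> ->] /=; split; lia.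
Qed.

Lemma path_box u t : path unit_step u t -> forall p : point, p \in u :: t ->
  (u.1 <= p.1 /\ p.1 <= (last u t).1) /\ (u.2 <= p.2 /\ p.2 <= (last u t).2).
Proof.
elim: t u => [|w t IH] u /=.
  by move=> _ p; rewrite in_cons in_nil orbF => /eqP ->; split; split.
case/andP=> st pt p; have [h1 [h2 h3]] := step_le st.
have Hw := IH w pt w (mem_head _ _).
rewrite in_cons; case/orP=> [/eqP ->|/(IH w pt) H]; split; split; lia.
Qed.

Lemma lp_box u v P (p : point) : lattice_path u v P -> p \in P ->
  (u.1 <= p.1 /\ p.1 <= v.1) /\ (u.2 <= p.2 /\ p.2 <= v.2).
Proof. by case=> t [-> [pt <-]]; apply: path_box. Qed.

Lemma lp_end u v P : lattice_path u v P -> v \in P.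
Proof. by case=> t [-> [_ <-]]; apply: mem_last. Qed.

Lemma lp_start u v P : lattice_path u v P -> u \in P.
Proof. by case=> t [-> _]; apply: mem_head. Qed.

Lemma lp_seg c x0 l : lattice_path (x0, c) (x0 + l%:Z, c) (seg c x0 l).
Proof.
elim: l x0 => [|l IH] x0 /=.
  by exists [::]; split=> //; split=> //=; rewrite addr0.
have [t [E [pt lt]]] := IH (x0 + 1).
exists ((x0 + 1, c) :: t); split; first by rewrite E.
split; first by rewrite /= pt andbT /unit_step eqxx.
rewrite /= lt; congr pair; lia.
Qed.

Lemma horiz_aux t u : path unit_step u t -> u.2 = (last u t).2 ->
  u :: t = seg u.2 u.1 (absz ((last u t).1 - u.1)).
Proof.
elim: t u => [|w t IH] u /=.
  by move=> _ _; rewrite subrr /=; case: u.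
case/andP=> st pt E.
have [[b1 b2] [b3 b4]] := path_box pt (mem_head _ _).
have [h1 [h2 h3]] := step_le st.
have ew : w = (u.1 + 1, u.2).
  move: st; rewrite /unit_step => /orP [/eqP -> //|/eqP E1].
  have : w.2 = u.2 + 1 by rewrite E1.
  move=> ?; exfalso; lia.
have w1 : w.1 = u.1 + 1 by rewrite ew.
have w2 : w.2 = u.2 by rewrite ew.
have Ew : w.2 = (last w t).2 by lia.
rewrite (IH w pt Ew).
have -> : absz ((last w t).1 - u.1) = (absz ((last w t).1 - w.1)).+1 by lia.
by rewrite /= w1 w2; case: (u) => x y.
Qed.

Lemma lp_horiz u v P : lattice_path u v P -> u.2 = v.2 ->
  P = seg u.2 u.1 (absz (v.1 - u.1)) /\ u.1 <= v.1.
Proof.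
move=> lp E; have [[h _] _] := lp_box lp (lp_end lp).
case: lp => t [-> [pt lt]]; split=> //.
by rewrite -lt; apply: horiz_aux; rewrite // lt.
Qed.

Lemma lp_cat u w w' v P Q : lattice_path u w P -> lattice_path w' v Q ->
  unit_step w w' -> lattice_path u v (P ++ Q).
Proof.
case=> t [-> [pt lt]] [t' [-> [pt' lt']]] st.
exists (t ++ w' :: t'); split=> //; split.
  by rewrite cat_path pt lt /= st pt'.
by rewrite last_cat lt /= lt'.
Qed.

Lemma lp_ext u bt c P l : lattice_path u (bt, c - 1) P ->
  lattice_path u (bt + l%:Z, c) (P ++ seg c bt l).
Proof.
move=> lp; apply: (lp_cat lp (lp_seg c bt l)).
by rewrite /unit_step /= subrK eqxx orbT.
Qed.

Lemma lp_decomp u v P : lattice_path u v P -> u.2 < v.2 ->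
  exists P' bt, P = P' ++ seg v.2 bt (absz (v.1 - bt)) /\
     lattice_path u (bt, v.2 - 1) P' /\ bt <= v.1.
Proof.
case=> t [-> [pt <-]]; elim: t u pt => [|w t IH] u /=.
  by rewrite ltxx.
case/andP=> st pt lt.
have [[b1 b2] [b3 b4]] := path_box pt (mem_head _ _).
have [h1 [h2 h3]] := step_le st.
case: (ltP w.2 (last w t).2) => hw.
  have [P' [bt [E [lp' le]]]] := IH w pt hw.
  exists (u :: P'), bt; split; first by rewrite E.
  split=> //; case: lp' => t' [E' [pt' lt']].
  exists P'; split=> //; rewrite E' /=; split; first by rewrite st.
  by [].
have Ew : w.2 = (last w t).2 by lia.
have ew : w = (u.1, u.2 + 1).
  move: st; rewrite /unit_step => /orP [/eqP E1|/eqP -> //].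
  have : w.1 = u.1 + 1 by rewrite E1.
  have : w.2 = u.2 by rewrite E1.
  move=> ? ?; exfalso; lia.
have [E _] := lp_horiz (ex_intro _ t (conj erefl (conj pt erefl))) Ew.
have w1 : w.1 = u.1 by rewrite ew.
have w2 : w.2 = u.2 + 1 by rewrite ew.
exists [:: u], u.1; split.
  by rewrite E /= -Ew w1.
split; last by lia.
exists [::]; split=> //; split=> //=.
rewrite [in LHS](surjective_pairing u); congr pair; lia.
Qed.

Definition rng (r : nat * nat) : seq nat := iota r.1 (r.2.+1 - r.1).

Fixpoint cprod (R : seq (nat * nat)) : seq (seq nat) :=
  if R is r :: R' then [seq v :: t | v <- rng r, t <- cprod R'] else [:: [::]].

Definition granges (l : nat) (xs : seq nat) : seq (nat * nat) :=
  [seq (if i is i'.+1 then (nth 0%N xs i').+1 else l, nth 0%N xs i) | i <- iota 0 (size xs)].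

Lemma mem_cprod bs R : bs \in cprod R <-> size bs = size R /\
  (forall i, (i < size R)%N -> ((nth (0,0)%N R i).1 <= nth 0%N bs i <= (nth (0,0)%N R i).2)%N).
Proof.
elim: R bs => [|r R IH] bs /=.
  by rewrite mem_seq1; split=> [/eqP -> //|[/size0nil -> _]].
split.
  case/allpairsP=> [[v t] [/= vr tR ->]]; move/IH: tR => [st H]; split=> /=; first by rewrite st.
  case=> [|i] /=; last by apply: H.
  by move: vr; rewrite mem_iota; lia.
case: bs => [|v t]; first by case.
move=> /= [[st] H]; apply/allpairsP; exists (v, t); split=> //=.
  by rewrite mem_iota; have := H 0%N isT; simpl; lia.
by apply/IH; split=> // i Hi; apply: (H i.+1).
Qed.

Lemma uniq_cprod R : uniq (cprod R).
Proof.
elim: R => [|r R IH] //=; apply: allpairs_uniq => //; first exact: iota_uniq.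
by move=> [x y] [x' y'] _ _ /= [-> ->].
Qed.

Definition interl (l : nat) (xs bs : seq nat) :=
  size bs = size xs /\
  (forall i, (i < size xs)%N -> nth 0%N bs i <= nth 0%N xs i)%N /\
  (0 < size xs -> l <= nth 0%N bs 0)%N /\
  (forall i, (i.+1 < size xs)%N -> nth 0%N xs i < nth 0%N bs i.+1)%N.

Lemma mem_granges l xs bs : bs \in cprod (granges l xs) <-> interl l xs bs.
Proof.
rewrite mem_cprod /granges size_map size_iota.
have E i : (i < size xs)%N -> nth (0,0)%N [seq (if i is i'.+1 then (nth 0%N xs i').+1 else l, nth 0%N xs i) | i <- iota 0 (size xs)] i
   = (if i is i'.+1 then (nth 0%N xs i').+1 else l, nth 0%N xs i).
  by move=> Hi; rewrite (nth_map 0%N) ?size_iota // nth_iota.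
split.
  case=> s H; split=> //; split; [|split].
  - by move=> i Hi; have := H i Hi; rewrite E //; case/andP.
  - by move=> Hi; have := H 0%N Hi; rewrite E //; case/andP.
  - by move=> i Hi; have := H i.+1 Hi; rewrite E //; case/andP.
case=> s [H1 [H2 H3]]; split=> // i Hi; rewrite E //; apply/andP; split; last exact: H1.
by case: i Hi => [|i] Hi; [apply: H2 | apply: H3].
Qed.

Lemma sorted_nth_le (xs : seq nat) i j : sorted leq xs -> (i <= j)%N -> (j < size xs)%N ->
  (nth 0%N xs i <= nth 0%N xs j)%N.
Proof.
move=> so ij js; apply: (sorted_leq_nth leq_trans leqnn) => //; rewrite inE; lia.
Qed.

Lemma interl_ge l xs bs i : interl l xs bs -> (i < size xs)%N -> (l <= nth 0%N bs i)%N.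
Proof.
case=> _ [H1 [H2 H3]]; elim: i => [|i IH] Hi; first exact: H2.
have := IH (ltnW Hi); have := H1 i (ltnW Hi); have := H3 i Hi; lia.
Qed.

Lemma interl_sorted l xs bs : interl l xs bs -> sorted leq bs.
Proof.
move=> I; case: (I) => s [H1 [H2 H3]]; apply/(sortedP 0%N) => i; rewrite s => Hi.
have := H1 i (ltnW Hi); have := H3 i Hi; lia.
Qed.

Definition extP (a c : int) (P : seq point) (bt x : nat) : seq point :=
  P ++ seg c (a + bt%:Z) (x - bt)%N.

Definition ext (a c : int) (F : seq (seq point)) (bs xs : seq nat) :=
  [seq extP a c (nth [::] F i) (nth 0%N bs i) (nth 0%N xs i) | i <- iota 0 (size xs)].

Definition resP (c : int) (P : seq point) := [seq p <- P | p.2 < c].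
Definition betaOf (a c : int) (P : seq point) :=
  absz ((head ((0:int), (0:int)) [seq p <- P | p.2 == c]).1 - a).

Lemma size_ext a c F bs xs : size (ext a c F bs xs) = size xs.
Proof. by rewrite size_map size_iota. Qed.

Lemma nth_ext a c F bs xs i : (i < size xs)%N ->
  nth [::] (ext a c F bs xs) i = extP a c (nth [::] F i) (nth 0%N bs i) (nth 0%N xs i).
Proof. by move=> Hi; rewrite (nth_map 0%N) ?size_iota // nth_iota. Qed.

Lemma seg_head d c x0 l : head d (seg c x0 l) = (x0, c).
Proof. by case: l. Qed.

Lemma filter_seg_lt c x0 l : [seq p <- seg c x0 l | p.2 < c] = [::].
Proof.
apply/eqP; rewrite -[_ == _]negbK -has_filter; apply/hasPn => p /mem_seg_row ->.
by rewrite ltxx.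
Qed.

Lemma filter_seg_eq c x0 l : [seq p <- seg c x0 l | p.2 == c] = seg c x0 l.
Proof. by apply/all_filterP/allP => p /mem_seg_row ->. Qed.

Lemma resP_ext a c P bt x : all (fun p : point => p.2 < c) P ->
  resP c (extP a c P bt x) = P.
Proof.
by move=> H; rewrite /resP /extP filter_cat filter_seg_lt cats0; apply/all_filterP.
Qed.

Lemma betaOf_ext a c P bt x : all (fun p : point => p.2 < c) P ->
  betaOf a c (extP a c P bt x) = bt.
Proof.
move=> H; rewrite /betaOf /extP filter_cat.
have -> : [seq p <- P | p.2 == c] = [::].
  apply/eqP; rewrite -[_ == _]negbK -has_filter; apply/hasPn => p /(allP H) /=.
  by rewrite lt_neqAle => /andP [].
by rewrite filter_seg_eq /= seg_head /=; lia.
Qed.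

Lemma lp_rows u v P : lattice_path u v P -> all (fun p : point => p.2 < v.2 + 1) P.
Proof. by move=> lp; apply/allP => -[px py] /(lp_box lp) [_ [_ h]] /=; rewrite /= in h; lia. Qed.

Lemma lp_decompP a s c x P : s < c -> lattice_path (a, s) (a + x%:Z, c) P ->
  [/\ P = extP a c (resP c P) (betaOf a c P) x,
      lattice_path (a, s) (a + (betaOf a c P)%:Z, c - 1) (resP c P) &
      (betaOf a c P <= x)%N].
Proof.
move=> sc lp; have [P' [bt [E [lp' le]]]] := lp_decomp lp sc.
have [[h1 _] _] := lp_box lp' (lp_start lp').
have [[h2 _] _] := lp_box lp' (lp_end lp'); rewrite /= in h1 h2 le.
have rows : all (fun p : point => p.2 < c) P'.
  by apply/allP => p /(lp_box lp') [_ [_ h]] /=; rewrite /= in h; lia.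
have Hb : bt = a + (absz (bt - a))%:Z by lia.
have EP : P = extP a c P' (absz (bt - a)) x.
  rewrite E /extP -Hb; congr (_ ++ seg _ _ _) => /=; lia.
rewrite EP resP_ext // betaOf_ext //; split=> //.
  by rewrite -Hb.
lia.
Qed.

Definition famP (a s c : int) (xs : seq nat) (F : seq (seq point)) :=
  size F = size xs /\
  (forall i, (i < size xs)%N ->
     lattice_path (a, s - i%:Z) (a + (nth 0%N xs i)%:Z, c) (nth [::] F i)) /\
  (forall i j, (i < size xs)%N -> (j < size xs)%N -> i != j ->
     ~~ meet_paths (nth [::] F i) (nth [::] F j)).

Definition wall (a c : int) (l : nat) (F : seq (seq point)) :=
  forall i (p : point), (i < size F)%N -> p \in nth [::] F i -> p.2 = c -> a + l%:Z <= p.1.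

Lemma meetPn (P Q : seq point) : reflect (forall p, p \in P -> p \notin Q) (~~ meet_paths P Q).
Proof. exact: hasPn. Qed.

Lemma lp_endeq u v v' P : lattice_path u v P -> v = v' -> lattice_path u v' P.
Proof. by move=> ? <-. Qed.

Lemma rows_lt a s c bs F i : famP a s (c - 1) bs F -> (i < size bs)%N ->
  all (fun p : point => p.2 < c) (nth [::] F i).
Proof.
case=> _ [lps _] Hi; apply/allP => -[px py] /(lp_box (lps i Hi)) [_ [_ h]] /=.
rewrite /= in h; lia.
Qed.

Lemma inv_ext a s c F bs xs : famP a s (c - 1) bs F -> size bs = size xs ->
  map (resP c) (ext a c F bs xs) = F /\ map (betaOf a c) (ext a c F bs xs) = bs.
Proof.
move=> fp sb; have sF : size F = size xs by case: fp => -> _.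
split; apply: (eq_from_nth (x0 := _)); rewrite ?size_map ?size_ext ?size_iota ?sF ?sb //.
  move=> i Hi; rewrite (nth_map [::]) ?size_ext // nth_ext //.
  by rewrite resP_ext //; apply: (rows_lt fp); rewrite sb.
move=> i Hi; rewrite (nth_map [::]) ?size_ext // nth_ext //.
by rewrite betaOf_ext //; apply: (rows_lt fp); rewrite sb.

Qed.

Lemma fwd a s c l xs bs F : sorted leq xs -> interl l xs bs -> famP a s (c - 1) bs F ->
  famP a s c xs (ext a c F bs xs) /\ wall a c l (ext a c F bs xs).
Proof.
move=> so I fp; have I' := I; case: I' => sb [H1 [H2 H3]].
case: (fp) => sz [lps dis]; rewrite sb in lps dis.
have rowF k (p : point) : (k < size xs)%N -> p \in nth [::] F k -> p.2 < c.
  by move=> Hk /(lp_box (lps k Hk)) [_ [_ h]]; rewrite /= in h; lia.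
have segF k (p : point) : p \in seg c (a + (nth 0%N bs k)%:Z) (nth 0%N xs k - nth 0%N bs k)%N ->
    (k < size xs)%N -> p.2 = c /\ a + (nth 0%N bs k)%:Z <= p.1 <= a + (nth 0%N xs k)%:Z.
  move=> Hp Hk; split; first exact: mem_seg_row Hp.
  have := mem_seg_col Hp; have := H1 k Hk; move=> h1 /andP [h2 h3]; apply/andP; split; lia.
have lt_ij i j : (i < j)%N -> (j < size xs)%N -> (nth 0%N xs i < nth 0%N bs j)%N.
  move=> ij js; case: j ij js => [//|j] ij js.
  have := H3 j js; have := sorted_nth_le so (i := i) (j := j); lia.
split; last first.
  move=> i p; rewrite size_ext => Hi; rewrite nth_ext // /extP mem_cat => /orP [/(rowF _ _ Hi) h e|].
    by rewrite e ltxx in h.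
  move=> /segF /(_ Hi) [_ /andP [h _]] _; have := interl_ge I Hi; lia.
split; first by rewrite size_ext.
split.
  move=> i Hi; rewrite nth_ext //; apply: lp_endeq; first exact: lp_ext (lps i Hi).
  by have := H1 i Hi => h; congr pair; lia.
move=> i j Hi Hj ij; apply/meetPn => p; rewrite !nth_ext // /extP !mem_cat.
case/orP=> [pi|pi]; apply/negP; case/orP=> pj.
- by move/meetPn: (dis i j Hi Hj ij) => /(_ p pi); rewrite pj.
- by have := rowF _ _ Hi pi; have [-> _] := segF _ _ pj Hj; rewrite ltxx.
- by have := rowF _ _ Hj pj; have [-> _] := segF _ _ pi Hi; rewrite ltxx.
have [_ /andP [a1 a2]] := segF _ _ pi Hi; have [_ /andP [b1 b2]] := segF _ _ pj Hj.
case: (ltngtP i j) ij => // [ij|ji] _.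
  by have := lt_ij _ _ ij Hj; lia.
by have := lt_ij _ _ ji Hi; lia.
Qed.

Lemma mem_extP_head a c P bt x : (a + bt%:Z, c) \in extP a c P bt x.
Proof. by rewrite /extP mem_cat; apply/orP; right; apply: seg_mem; apply/andP; split; lia. Qed.

Lemma bwd a s c l xs F : s < c -> sorted leq xs -> famP a s c xs F -> wall a c l F ->
  [/\ F = ext a c (map (resP c) F) (map (betaOf a c) F) xs,
      interl l xs (map (betaOf a c) F) &
      famP a s (c - 1) (map (betaOf a c) F) (map (resP c) F)].
Proof.
move=> sc so [sz [lps dis]] wl.
have D i : (i < size xs)%N -> [/\ nth [::] F i = extP a c (resP c (nth [::] F i)) (betaOf a c (nth [::] F i)) (nth 0%N xs i),
      lattice_path (a, s - i%:Z) (a + (betaOf a c (nth [::] F i))%:Z, c - 1) (resP c (nth [::] F i)) &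
      (betaOf a c (nth [::] F i) <= nth 0%N xs i)%N].
  by move=> Hi; apply: lp_decompP; [lia | exact: lps].
have nb i : (i < size xs)%N -> nth 0%N (map (betaOf a c) F) i = betaOf a c (nth [::] F i).
  by move=> Hi; rewrite (nth_map [::]) // sz.
have nr i : (i < size xs)%N -> nth [::] (map (resP c) F) i = resP c (nth [::] F i).
  by move=> Hi; rewrite (nth_map [::]) // sz.
have EF : F = ext a c (map (resP c) F) (map (betaOf a c) F) xs.
  apply: (eq_from_nth (x0 := [::])); first by rewrite size_ext.
  move=> i Hi; rewrite sz in Hi; rewrite nth_ext // nr // nb //.
  by case: (D i Hi).
split=> //.
  split; first by rewrite size_map.
  split; first by move=> i Hi; rewrite nb //; case: (D i Hi).
  split.
    move=> H0; rewrite nb //.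
    have := wl 0%N (a + (betaOf a c (nth [::] F 0))%:Z, c); rewrite sz => /(_ H0).
    case: (D 0%N H0) => E0 _ _.
    have hm : (a + (betaOf a c (nth [::] F 0))%:Z, c) \in nth [::] F 0.
      by rewrite [X in _ \in X]E0 mem_extP_head.
    by move=> /(_ hm erefl) /=; lia.
  move=> i Hi; rewrite nb //; case: leqP => // hle.
  have Hi' : (i < size xs)%N by lia.
  have q1 : (a + (nth 0%N xs i)%:Z, c) \in nth [::] F i := lp_end (lps i Hi').
  have q2 : (a + (nth 0%N xs i)%:Z, c) \in nth [::] F i.+1.
    case: (D i.+1 Hi) => E1 _ b1; rewrite E1 /extP mem_cat; apply/orP; right.
    apply: seg_mem; have := sorted_nth_le so (i := i) (j := i.+1) (leqnSn i) Hi.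
    move=> h; apply/andP; split; lia.
  by move/meetPn: (dis i i.+1 Hi' Hi (negbT (ltn_eqF (ltnSn i)))) => /(_ _ q1); rewrite q2.
split; first by rewrite !size_map.
rewrite size_map sz; split.
  by move=> i Hi; rewrite nr // nb //; case: (D i Hi).
move=> i j Hi Hj ij; rewrite !nr //; apply/meetPn => p; rewrite !mem_filter.
case/andP=> _ pi; apply/negP; case/andP=> _ pj.
by move/meetPn: (dis i j Hi Hj ij) => /(_ _ pi); rewrite pj.
Qed.

Lemma gstep a s c l xs (E : seq nat -> seq (seq (seq point))) :
  s < c -> sorted leq xs ->
  (forall bs, interl l xs bs -> uniq (E bs) /\
     (forall F, F \in E bs <-> famP a s (c - 1) bs F)) ->
  uniq [seq ext a c F' bs xs | bs <- cprod (granges l xs), F' <- E bs] /\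
  (forall F, F \in [seq ext a c F' bs xs | bs <- cprod (granges l xs), F' <- E bs]
     <-> famP a s c xs F /\ wall a c l F).
Proof.
move=> sc so IH; split.
  apply: allpairs_uniq_dep; first exact: uniq_cprod.
    by move=> bs /mem_granges /IH [].
  move=> p1 p2 /allpairsPdep [bs1 [F1 [m1 n1 ->]]] /allpairsPdep [bs2 [F2 [m2 n2 ->]]] /= eq.
  have I1 := m1; have I2 := m2; move/mem_granges in I1; move/mem_granges in I2.
  have f1 : famP a s (c - 1) bs1 F1 by apply/(IH _ I1).2.
  have f2 : famP a s (c - 1) bs2 F2 by apply/(IH _ I2).2.
  have [r1 b1] := inv_ext f1 I1.1; have [r2 b2] := inv_ext f2 I2.1.
  have ebs : bs1 = bs2 by rewrite -b1 -b2 eq.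
  subst bs2; have eF : F1 = F2 by rewrite -r1 -r2 eq.
  by rewrite eF.
move=> F; split.
  case/allpairsPdep=> bs [F' [m n ->]]; move/mem_granges: m => I.
  exact: fwd so I (((IH _ I).2 _).1 n).
case=> fp wl; have [EF I fp'] := bwd sc so fp wl.
apply/allpairsPdep; exists (map (betaOf a c) F), (map (resP c) F); split=> //.
  exact/mem_granges.
exact/(IH _ I).2.
Qed.

Fixpoint En (a : int) (n : nat) (b : int) (h : nat) (xs : seq nat) {struct n}
  : seq (seq (seq point)) :=
  match n with
  | 0 => [:: [::]]
  | n'.+1 =>
    let fix Eh (h : nat) (xs : seq nat) {struct h} :=
      match h with
      | 0 => map (cons (seg b a (head 0%N xs)))
               [seq ext a b F' bs (behead xs) |
                  bs <- cprod (granges (head 0%N xs).+1 (behead xs)),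
                  F' <- En a n' (b - 1) 0 bs]
      | h'.+1 => [seq ext a (b + (h'.+1)%:Z) F' bs xs | bs <- cprod (granges 0 xs),
                  F' <- Eh h' bs]
      end in Eh h xs
  end.

Lemma En_S0 a n b xs : En a n.+1 b 0 xs =
  map (cons (seg b a (head 0%N xs)))
    [seq ext a b F' bs (behead xs) | bs <- cprod (granges (head 0%N xs).+1 (behead xs)),
       F' <- En a n (b - 1) 0 bs].
Proof. by []. Qed.

Lemma En_SS a n b h xs : En a n.+1 b h.+1 xs =
  [seq ext a (b + (h.+1)%:Z) F' bs xs | bs <- cprod (granges 0 xs), F' <- En a n.+1 b h bs].
Proof. by []. Qed.

Lemma lp_eq u u' v v' P : u = u' -> v = v' -> lattice_path u v P -> lattice_path u' v' P.
Proof. by move=> <- <-. Qed.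

Lemma famP_c a s c c' xs F : c = c' -> famP a s c xs F -> famP a s c' xs F.
Proof. by move=> ->. Qed.

Lemma wall0 a s c xs F : famP a s c xs F -> wall a c 0 F.
Proof.
case=> sz [lps _] i p Hi /(lp_box (lps i _)); rewrite -sz => /(_ Hi) [[h _] _] _.
by rewrite /= in h; lia.
Qed.

Lemma cons_step a b x0 xs' (L : seq (seq (seq point))) :
  uniq L /\ (forall G, G \in L <-> famP a (b - 1) b xs' G /\ wall a b x0.+1 G) ->
  uniq (map (cons (seg b a x0)) L) /\
  (forall F, F \in map (cons (seg b a x0)) L <-> famP a b b (x0 :: xs') F).
Proof.
case=> uL HL; split.
  by rewrite map_inj_uniq // => G1 G2 [].
move=> F; split.
  case/mapP=> G /HL [[sz [lps dis]] wl] ->.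
  split; first by rewrite /= sz.
  split.
    case=> [|i] Hi /=.
      by apply: (lp_eq _ _ (lp_seg b a x0)); congr pair; lia.
    by apply: (lp_eq _ _ (lps i Hi)); congr pair; lia.
  case=> [|i] [|j] //= Hi Hj ij.
  - apply/meetPn => p ps; apply/negP => pj.
    have := wl j p; rewrite sz => /(_ Hj pj (mem_seg_row ps)).
    by have /andP [_ h2] := mem_seg_col ps; lia.
  - apply/meetPn => p pi; apply/negP => ps.
    have := wl i p; rewrite sz => /(_ Hi pi (mem_seg_row ps)).
    by have /andP [_ h2] := mem_seg_col ps; lia.
  - exact: dis.
case: F => [|F0 G]; first by case.
case=> /= [[sz] [lps dis]].
have lp0 : lattice_path (a, b) (a + x0%:Z, b) F0.
  by apply: (lp_eq _ _ (lps 0%N isT)) => //; congr pair; lia.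
have [E0 _] := lp_horiz lp0 erefl.
have EF0 : F0 = seg b a x0 by rewrite E0 /=; congr seg; lia.
apply/mapP; exists G; last by rewrite EF0.
apply/HL; split.
  split=> //; split.
    by move=> i Hi; apply: (lp_eq _ _ (lps i.+1 Hi)); congr pair; lia.
  by move=> i j Hi Hj ij; apply: (dis i.+1 j.+1).
move=> i p Hi pi pb; rewrite sz in Hi.
have [[h1 _] _] := lp_box (lps i.+1 Hi) pi; rewrite /= in h1.
case: (leP p.1 (a + x0%:Z)) => hle; last by lia.
have : p \in F0 by rewrite EF0 (surjective_pairing p) pb seg_mem //; apply/andP; split; lia.
by move/meetPn: (dis 0%N i.+1 isT Hi isT) => /(_ p) H /H; rewrite pi.
Qed.

Lemma En_spec n : forall a b h xs, size xs = n -> sorted leq xs ->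
  uniq (En a n b h xs) /\ (forall F, F \in En a n b h xs <-> famP a b (b + h%:Z) xs F).
Proof.
elim: n => [|n IHn] a b h xs.
  move/size0nil => -> _ /=; split=> // F; rewrite mem_seq1; split.
    move/eqP=> ->; split=> //; split=> //.
  by case=> /size0nil -> _.
elim: h xs => [|h IHh] xs sx so.
  case: xs sx so => [//|x0 xs'] [sx] so; rewrite En_S0 /=.
  have so' : sorted leq xs' by apply: path_sorted so.
  have G := @gstep a (b - 1) b x0.+1 xs' (fun bs => En a n (b - 1) 0 bs) _ so'.
  have [|u H] := cons_step (a := a) (b := b) (x0 := x0) (xs' := xs')
     (L := [seq ext a b F' bs xs' | bs <- cprod (granges x0.+1 xs'),
       F' <- En a n (b - 1) 0 bs]).
    apply: G; first by lia.
    move=> bs I.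
    have [u' H'] := IHn a (b - 1) 0%N bs (etrans (I.1) sx) (interl_sorted I).
    split=> // F; rewrite H'; split; by apply: famP_c; lia.
  split=> // F; rewrite H; split; by apply: famP_c; lia.
rewrite En_SS.
have H0 : b < b + (h.+1)%:Z by lia.
have IH' : forall bs, interl 0 xs bs -> uniq (En a n.+1 b h bs) /\ (forall F, F \in En a n.+1 b h bs <-> famP a b (b + (h.+1)%:Z - 1) bs F).
  move=> bs I; have [u' H'] := IHh bs (etrans I.1 sx) (interl_sorted I).
  split=> // F; rewrite H'; split; by apply: famP_c; lia.
have [u H] := gstep H0 so IH'.
split=> // F; rewrite H; split; first by case.
by move=> fp; split=> //; apply: wall0 fp.
Qed.

Lemma cprod_prod (R : seq (nat * nat)) : forall n (phi : nat -> nat -> rat), size R = n ->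
  \sum_(bs <- cprod R) \prod_(j < n) phi j (nth 0%N bs j) =
  \prod_(j < n) \sum_(v <- rng (nth (0,0)%N R j)) phi j v.
Proof.
elim: R => [|r R IH] n phi /=.
  by move=> <-; rewrite big_seq1 !big_ord0.
case: n => // n [sz].
rewrite big_allpairs_dep /= big_ord_recl /= mulr_suml; apply: eq_bigr => v _.
rewrite -(IH n (fun j => phi j.+1)) // mulr_sumr; apply: eq_bigr => t _.
by rewrite big_ord_recl /=; congr (_ * _); apply: eq_bigr => j _; rewrite lift0.
Qed.

Lemma detT n (A : 'M[rat]_n) : \det A = \sum_(s : 'S_n) (-1) ^+ s * \prod_i A (s i) i.
Proof.
rewrite -det_tr /determinant; apply: eq_bigr => s _; congr (_ * _).
by apply: eq_bigr => i _; rewrite mxE.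
Qed.

Lemma det_sum_cprod n R (g : nat -> nat -> rat) : size R = n ->
  \sum_(bs <- cprod R) \det (\matrix_(i < n, j < n) g (i : nat) (nth 0%N bs j)) =
  \det (\matrix_(i < n, j < n) \sum_(v <- rng (nth (0,0)%N R j)) g (i : nat) v).
Proof.
move=> sR; under eq_bigr => bs _ do rewrite detT.
rewrite detT exchange_big /=; apply: eq_bigr => s _.
rewrite -mulr_sumr; congr (_ * _).
pose phi (j v : nat) := if (insub j : option 'I_n) is Some k then g (s k : nat) v else 0.
have phiE (i : 'I_n) v : phi i v = g (s i : nat) v by rewrite /phi valK.
transitivity (\sum_(bs <- cprod R) \prod_(i < n) phi i (nth 0%N bs i)).
  by apply: eq_bigr => bs _; apply: eq_bigr => i _; rewrite mxE phiE.
rewrite (@cprod_prod R n phi sR).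
by apply: eq_bigr => i _; rewrite mxE; apply: eq_bigr => v _; rewrite phiE.
Qed.

Lemma nth_granges l xs k : (k < size xs)%N ->
  nth (0,0)%N (granges l xs) k = (if k is k'.+1 then (nth 0%N xs k').+1 else l, nth 0%N xs k).
Proof. by move=> Hk; rewrite (nth_map 0%N) ?size_iota // nth_iota. Qed.

Lemma part_sum (xs : seq nat) (G : nat -> rat) j : sorted leq xs -> (j < size xs)%N ->
  \sum_(0 <= v < (nth 0%N xs j).+1) G v =
  \sum_(0 <= k < j.+1) \sum_(v <- rng (nth (0,0)%N (granges 0 xs) k)) G v.
Proof.
move=> so; elim: j => [|j IH] Hj.
  by rewrite big_nat1 nth_granges.
rewrite [RHS]big_nat_recr //= -IH; last by lia.
rewrite nth_granges // (big_cat_nat _ (n := (nth 0%N xs j).+1)) //.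
by have := sorted_nth_le so (i := j) (j := j.+1) (leqnSn j) Hj.
Qed.

Lemma colops n xs (g : nat -> nat -> rat) : size xs = n -> sorted leq xs ->
  \det (\matrix_(i < n, j < n) \sum_(0 <= v < (nth 0%N xs j).+1) g (i : nat) v) =
  \det (\matrix_(i < n, j < n) \sum_(v <- rng (nth (0,0)%N (granges 0 xs) j)) g (i : nat) v).
Proof.
move=> sx so.
set B := \matrix_(i < n, j < n) \sum_(v <- rng (nth (0,0)%N (granges 0 xs) j)) g (i : nat) v.
set L := \matrix_(k < n, j < n) ((k <= j)%N%:R : rat).
have -> : \matrix_(i < n, j < n) \sum_(0 <= v < (nth 0%N xs j).+1) g (i : nat) v = B *m L.
  apply/matrixP => i j; rewrite !mxE part_sum //; last by rewrite sx.
  transitivity (\sum_(k < n | (k < j.+1)%N) B i k).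
    rewrite big_mkord (@big_ord_widen _ _ _ j.+1 n (fun k => \sum_(v <- rng (nth (0,0)%N (granges 0 xs) k)) g (i : nat) v) (ltn_ord j)).
    by apply: eq_bigr => k _; rewrite mxE.
  rewrite big_mkcond; apply: eq_bigr => k _; rewrite [L _ _]mxE ltnS.
  by case: leqP => _; rewrite ?mulr1 ?mulr0.
rewrite det_mulmx -[\det L]det_tr (@det_trig _ _ L^T).
  by rewrite big1 ?mulr1 // => i _; rewrite !mxE leqnn.
by apply/forallP => i; apply/forallP => j; apply/implyP => ij; rewrite !mxE leqNgt ij.
Qed.

Lemma hockey x h i : 'C(x + h.+1 + i, x) = \sum_(0 <= v < x.+1) 'C(v + h + i, v).
Proof.
elim: x => [|x IH]; first by rewrite big_nat1 !bin0.
rewrite big_nat_recr //= -IH.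
have -> : (x.+1 + h.+1 + i = (x + h.+1 + i).+1)%N by lia.
rewrite binS addnC; congr (_ + _)%N; f_equal; lia.
Qed.

Definition D n h (xs : seq nat) : rat :=
  \det (\matrix_(i < n, j < n) ('C(nth 0%N xs j + h + i, nth 0%N xs j))%:R).

Lemma D_recS n h xs : size xs = n -> sorted leq xs ->
  D n h.+1 xs = \sum_(bs <- cprod (granges 0 xs)) D n h bs.
Proof.
move=> sx so; rewrite /D.
rewrite (@det_sum_cprod n (granges 0 xs) (fun i v => ('C(v + h + i, v))%:R)); last first.
  by rewrite size_map size_iota.
rewrite -(@colops n xs (fun i v => ('C(v + h + i, v))%:R) sx so); congr (\det _); apply/matrixP => i j; rewrite !mxE.
by rewrite hockey natr_sum.
Qed.

Lemma granges_cons x0 xs' j : (j < size xs')%N ->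
  nth (0,0)%N (granges x0.+1 xs') j = nth (0,0)%N (granges 0 (x0 :: xs')) j.+1.
Proof. by move=> Hj; rewrite !nth_granges //=; case: j Hj. Qed.

Lemma D_rec0 n x0 xs' : size xs' = n -> sorted leq (x0 :: xs') ->
  D n.+1 0 (x0 :: xs') = \sum_(bs <- cprod (granges x0.+1 xs')) D n 0 bs.
Proof.
move=> sx so; rewrite /D.
rewrite (@det_sum_cprod n (granges x0.+1 xs') (fun i v => ('C(v + 0 + i, v))%:R)); last first.
  by rewrite size_map size_iota.
pose G (i v : nat) : rat := if i is i'.+1 then ('C(v + 0 + i', v))%:R else (v == 0)%N%:R.
have -> : \matrix_(i < n.+1, j < n.+1) ('C(nth 0%N (x0 :: xs') j + 0 + i, nth 0%N (x0 :: xs') j))%:R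
   = \matrix_(i < n.+1, j < n.+1) \sum_(0 <= v < (nth 0%N (x0 :: xs') j).+1) G i v.
  apply/matrixP => i j; rewrite !mxE.
  case: i => [[|i] Hi] /=.
    rewrite big_ltn // /G eqxx big1_seq ?addr0 ?addn0 ?binn //.
    by move=> v /andP [_]; rewrite mem_index_iota; case: v.
  rewrite /G; have -> : (nth 0%N (x0 :: xs') j + 0 + i.+1 = nth 0%N (x0 :: xs') j + 0.+1 + i)%N by lia.
  by rewrite hockey natr_sum.
rewrite colops //= ?sx //.
rewrite (expand_det_row _ ord0) big_ord_recl big1 ?addr0; last first.
  move=> j _; rewrite !mxE lift0 nth_granges /=; last by rewrite sx ltnS.
  rewrite big1_seq ?mul0r // => v /andP [_]; rewrite mem_iota /G; case: v => //.
rewrite !mxE nth_granges //= big_cons /G /= big1_seq ?addr0 ?mul1r; last first.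
  by move=> v /andP [_]; rewrite mem_iota; case: v.
rewrite /cofactor expr0 mul1r; congr (\det _); apply/matrixP => i j; rewrite !mxE.
rewrite lift0 granges_cons ?sx //; apply: eq_bigr => v _; rewrite !lift0 /G //.
Qed.

Lemma size_En n : forall a b h xs, size xs = n -> sorted leq xs ->
  (size (En a n b h xs))%:R = D n h xs.
Proof.
elim: n => [|n IHn] a b h xs.
  by move=> _ _; rewrite /D det_mx00.
elim: h xs => [|h IHh] xs sx so.
  case: xs sx so => [//|x0 xs'] [sx] so.
  rewrite En_S0 size_map size_allpairs_dep sumnE big_map natr_sum D_rec0 //.
  apply: eq_big_seq => bs /mem_granges I.
  apply: IHn; first by rewrite I.1.
  exact: interl_sorted I.
rewrite En_SS size_allpairs_dep sumnE big_map natr_sum D_recS //.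
apply: eq_big_seq => bs /mem_granges I.
apply: IHh; first by rewrite I.1.
exact: interl_sorted I.
Qed.

Lemma fact_split x h i : ((x + h + i)`! = (x + h)`! * \prod_(k < i) (x + h + k.+1))%N.
Proof.
elim: i => [|i IH]; first by rewrite big_ord0 addn0 muln1.
rewrite big_ord_recr /= addnS factS IH; set P := (\prod_(k < i) _)%N; ring.
Qed.

Definition pol (h i : nat) : {poly rat} :=
  \prod_(k <- iota 0 i) ('X - (- ((h + k.+1)%:R : rat))%:P).

Lemma size_pol h i : size (pol h i) = i.+1.
Proof. by rewrite /pol size_prod_XsubC size_iota. Qed.

Lemma lead_pol h i : lead_coef (pol h i) = 1.
Proof. exact: lead_coef_prod_XsubC. Qed.

Lemma horner_pol h i (x : rat) : (pol h i).[x] = \prod_(k < i) (x + (h + k.+1)%:R).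
Proof.
rewrite /pol horner_prod; have -> : iota 0 i = index_iota 0 i by rewrite /index_iota subn0.
rewrite big_mkord; by apply: eq_bigr => k _; rewrite hornerXsubC opprK.
Qed.

Lemma bin_rat x h i : ('C(x + h + i, x))%:R =
  (((x + h)`!)%:R / (x`!)%:R) * (1 / ((h + i)`!)%:R) * \prod_(k < i) ((x + h + k.+1)%N%:R : rat).
Proof.
have hx : (x <= x + h + i)%N by lia.
have := @bin_fact (x + h + i) x hx => /(congr1 (fun m => (m%:R : rat))).
rewrite fact_split !natrM -natr_prod.
have -> : (x + h + i - x = h + i)%N by lia.
have f1 : (x`!)%:R != 0 :> rat by rewrite pnatr_eq0 -lt0n fact_gt0.
have f2 : ((h + i)`!)%:R != 0 :> rat by rewrite pnatr_eq0 -lt0n fact_gt0.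
move=> E; apply: (mulIf (mulf_neq0 f1 f2)); rewrite E.
by field; rewrite f1 f2.
Qed.

Lemma D_closed n h xs :
  D n h xs = (\prod_(i < n) \prod_(j < n | (i < j)%N)
                 ((nth 0%N xs j)%:R - (nth 0%N xs i)%:R : rat)) *
             \prod_(i < n) (((nth 0%N xs i + h)`!)%:R /
                 (((nth 0%N xs i)`!)%:R * ((h + i)`!)%:R)).
Proof.
set x := fun j : 'I_n => nth 0%N xs j.
pose r := \row_(i < n) (1 / ((h + i)`!)%:R : rat).
pose c := \row_(j < n) (((x j + h)`!)%:R / ((x j)`!)%:R : rat).
pose L := \matrix_(i < n, k < n) (pol h i)`_k.
pose a := \row_(j < n) ((x j)%:R : rat).
have -> : D n h xs = \det (diag_mx r *m (L *m Vandermonde n a) *m diag_mx c).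
  rewrite /D mul_mx_diag mul_diag_mx; congr (\det _); apply/matrixP => i j; rewrite !mxE.
  rewrite bin_rat.
  have -> : \sum_(k < n) L i k * Vandermonde n a k j = (pol h i).[(x j)%:R].
    rewrite (@horner_coef_wide _ n); last by rewrite size_pol.
    by apply: eq_bigr => k _; rewrite !mxE.
  rewrite horner_pol /x.
  under eq_bigr do rewrite -addnA natrD.
  ring.
rewrite !det_mulmx !det_diag det_Vandermonde.
rewrite (@det_trig _ _ L); last first.
  apply/forallP => i; apply/forallP => k; apply/implyP => ik; rewrite mxE.
  by rewrite nth_default // size_pol.
rewrite [\prod_(i < n) L i i]big1 ?mul1r; last by move=> i _; rewrite mxE -(lead_pol h i) lead_coefE size_pol.
have -> : \prod_(i < n) \prod_(j < n | (i < j)%N) (a 0 j - a 0 i) = \prod_(i < n) \prod_(j < n | (i < j)%N) ((nth 0%N xs j)%:R - (nth 0%N xs i)%:R : rat).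
  by apply: eq_bigr => i _; apply: eq_bigr => j _; rewrite !mxE.
rewrite [X in _ = _ * X](eq_bigr (fun i : 'I_n => (1 / ((h + i)`!)%:R) * (((nth 0%N xs i + h)`!)%:R / ((nth 0%N xs i)`!)%:R : rat))); last first.
  move=> i _; have f1 : ((nth 0%N xs i)`!)%:R != 0 :> rat by rewrite pnatr_eq0 -lt0n fact_gt0.
  have f2 : ((h + i)`!)%:R != 0 :> rat by rewrite pnatr_eq0 -lt0n fact_gt0.
  by field; rewrite f1 f2.
rewrite big_split /=.
have -> : \prod_(i < n) r 0 i = \prod_(i < n) (1 / ((h + i)`!)%:R : rat) by apply: eq_bigr => i _; rewrite mxE.
have -> : \prod_(i < n) c 0 i = \prod_(i < n) (((nth 0%N xs i + h)`!)%:R / ((nth 0%N xs i)`!)%:R : rat).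
  by apply: eq_bigr => i _; rewrite mxE.
ring.
Qed.

Unset Implicit Arguments.

Theorem proposition8 (n : nat) (a b c : int) (alpha : nat -> int) :
  (0 < n)%N ->
  a <= alpha 0%N ->
  (forall i : nat, (i.+1 < n)%N -> alpha i <= alpha i.+1) ->
  b <= c ->
  exists S : seq (n.-tuple (seq point)),
    uniq S /\
    (forall F : n.-tuple (seq point), F \in S <-> nonint_family a b c alpha F) /\
    ((size S)%:R : rat) =
      (\prod_(i < n) \prod_(j < n | (i < j)%N) ((alpha j - alpha i)%:~R : rat)) *
      \prod_(i < n)
        (((absz (alpha i + c - a - b)%R)`!)%:R /
         (((absz (alpha i - a)%R)`!)%:R * ((absz (c - b + (i : nat)%:Z)%R)`!)%:R)).
Proof.
move=> n0 ha hs hbc.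
pose xs := [seq absz (alpha i - a) | i <- iota 0 n].
pose h := absz (c - b).
have sx : size xs = n by rewrite size_map size_iota.
have nx i : (i < n)%N -> nth 0%N xs i = absz (alpha i - a).
  by move=> Hi; rewrite (nth_map 0%N) ?size_iota // nth_iota.
have age i : (i < n)%N -> a <= alpha i.
  elim: i => [//|i IH] Hi; have := IH (ltnW Hi); have := hs i Hi; lia.
have ax i : (i < n)%N -> alpha i = a + (nth 0%N xs i)%:Z.
  by move=> Hi; rewrite nx //; have := age i Hi; lia.
have so : sorted leq xs.
  apply/(sortedP 0%N) => i; rewrite sx => Hi; rewrite !nx //; last by lia.
  have := hs i Hi; have := age i (ltnW Hi); lia.
have ch : c = b + h%:Z by rewrite /h; lia.
have [uL HL] := En_spec a b h sx so.
pose L := En a n b h xs.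
exists (pmap insub L).
have memF (F : n.-tuple (seq point)) : famP a b (b + h%:Z) xs (val F) <-> nonint_family a b c alpha F.
  split.
    case=> _ [lps dis]; split.
      move=> i; rewrite (tnth_nth [::]) (ax i (ltn_ord i)) ch; apply: lps; by rewrite sx.
    move=> i j ij; rewrite !(tnth_nth [::]); apply: dis; rewrite ?sx //.
  case=> lps dis; split; first by rewrite size_tuple sx.
  split.
    move=> i Hi; rewrite sx in Hi; have := lps (Ordinal Hi); rewrite (tnth_nth [::]) /=.
    by rewrite (ax i Hi) ch.
  move=> i j Hi Hj ij; rewrite sx in Hi Hj.
  by have := dis (Ordinal Hi) (Ordinal Hj) ij; rewrite !(tnth_nth [::]).
split; first exact: pmap_sub_uniq.
split.
  by move=> F; rewrite mem_pmap_sub HL.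
rewrite size_pmap_sub.
have -> : count (fun s : seq (seq point) => size s == n) L = size L.
  rewrite -[RHS]count_predT; apply: eq_in_count => F /HL [sF _]; by rewrite sF sx eqxx.
rewrite size_En // D_closed.
congr (_ * _).
  apply: eq_bigr => i _; apply: eq_bigr => j _.
  rewrite (ax i (ltn_ord i)) (ax j (ltn_ord j)).
  have -> : a + (nth 0%N xs j)%:Z - (a + (nth 0%N xs i)%:Z) = (nth 0%N xs j)%:Z - (nth 0%N xs i)%:Z by lia.
  by rewrite intrB.
apply: eq_bigr => i _; rewrite (ax i (ltn_ord i)).
have -> : absz (a + (nth 0%N xs i)%:Z + c - a - b)%R = (nth 0%N xs i + h)%N by lia.
have -> : absz (a + (nth 0%N xs i)%:Z - a)%R = nth 0%N xs i by lia.
have -> : absz (c - b + (i : nat)%:Z)%R = (h + i)%N by lia.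
by [].
Qed.
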